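(* For every $n\ge1$, let $\mathcal{I}_n=\Pi_f\big((1-\omega^n)^{-1}\mathbb{Z}[\lambda]\big)\subset\Xi$. Then $$\#\mathcal{I}_n=|N(1-\omega^n)|=\omega^{-n}-\omega^{n}-2\left(\omega^{-n/2}-\omega^{n/2}\right)\cos(n\theta),$$ where $N$ denotes the field norm of $\mathbb{Q}(\lambda)/\mathbb{Q}$ and $\theta\in(0,\pi)$ is defined by $\cos\theta=\tfrac12\sqrt{\omega}(5-\omega)$. Moreover $\#\mathcal{I}_n$ is a multiple of $M_n$, the smallest positive integer lying in the ideal $(1-\omega^n)\mathbb{Z}[\lambda]$.
   Context: Let $\lambda$ be the real root of $x^3+x^2+x-1$, $\omega=\lambda^3=1-\lambda-\lambda^2\in(0,1)$; $\mathbb{Z}[\lambda]$ is the ring of integers of $\mathbb{Q}(\lambda)$. Every $x\in\mathbb{Q}(\lambda)$ is uniquely $x=r_0+r_1\lambda+r_2\lambda^2$ with $r_i\in\mathbb{Q}$; set $\Xi=\{\xi_0+\xi_1\lambda+\xi_2\lambda^2:\ \xi_i\in\mathbb{Q}\cap[0,1)\}$ and $\Pi_f(x)=\{r_0\}+\{r_1\}\lambda+\{r_2\}\lambda^2$, where $\{r\}=r-\lfloor r\rfloor$. *)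

(* Defs.v *)
From HB Require Import structures.
From mathcomp Require Import all_boot all_order all_algebra.
From mathcomp Require Import all_classical all_reals all_analysis.
Set Implicit Arguments. Unset Strict Implicit. Unset Printing Implicit Defensive.
Import Order.TTheory GRing.Theory Num.Theory.
Local Open Scope ring_scope.
Local Open Scope classical_set_scope.

(* Elements of Q(lambda) = Q[x]/(x^3+x^2+x-1), written r0 + r1*lam + r2*lam^2 *)
Record Qlam := QL { q0 : rat; q1 : rat; q2 : rat }.

Definition ql_eval (R : realType) (lam : R) (x : Qlam) : R :=
  ratr (q0 x) + ratr (q1 x) * lam + ratr (q2 x) * lam ^+ 2.

Definition ql_sub (x y : Qlam) : Qlam :=
  QL (q0 x - q0 y) (q1 x - q1 y) (q2 x - q2 y).

(* multiplication, reducing with lam^3 = 1 - lam - lam^2, lam^4 = 2 lam - 1 *)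
Definition ql_mul (x y : Qlam) : Qlam :=
  let c0 := q0 x * q0 y in
  let c1 := q0 x * q1 y + q1 x * q0 y in
  let c2 := q0 x * q2 y + q1 x * q1 y + q2 x * q0 y in
  let c3 := q1 x * q2 y + q2 x * q1 y in
  let c4 := q2 x * q2 y in
  QL (c0 + c3 - c4) (c1 - c3 + 2 * c4) (c2 - c3).

Definition ql_one : Qlam := QL 1 0 0.
Definition ql_pow (x : Qlam) (n : nat) : Qlam := iter n (ql_mul x) ql_one.

(* omega = lam^3 = 1 - lam - lam^2 *)
Definition ql_omega : Qlam := QL 1 (-1) (-1).

(* multiplication by lam *)
Definition ql_lmul (x : Qlam) : Qlam := QL (q2 x) (q0 x - q2 x) (q1 x - q2 x).

Definition ql_coord (i : 'I_3) (x : Qlam) : rat :=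
  if val i == 0%N then q0 x else if val i == 1%N then q1 x else q2 x.

(* matrix of multiplication by x in the Q-basis (1, lam, lam^2):
   column j holds the coordinates of lam^j * x *)
Definition ql_mulmx (x : Qlam) : 'M[rat]_3 :=
  \matrix_(i < 3, j < 3) ql_coord i (iter j ql_lmul x).

Definition ql_norm (x : Qlam) : rat := \det (ql_mulmx x).

Definition rfrac (r : rat) : rat := r - (Num.floor r)%:~R.
Definition Pi_f (x : Qlam) : Qlam := QL (rfrac (q0 x)) (rfrac (q1 x)) (rfrac (q2 x)).

Definition zlam (R : realType) (lam : R) (a0 a1 a2 : int) : R :=
  a0%:~R + a1%:~R * lam + a2%:~R * lam ^+ 2.

Definition I_set (R : realType) (lam : R) (n : nat) : set R :=
  [set y | exists (r : Qlam) (a0 a1 a2 : int),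
      ql_eval lam r = (1 - (lam ^+ 3) ^+ n)^-1 * zlam lam a0 a1 a2 /\
      y = ql_eval lam (Pi_f r)].

Definition in_ideal (R : realType) (lam : R) (n m : nat) : Prop :=
  exists a0 a1 a2 : int, (m%:R : R) = (1 - (lam ^+ 3) ^+ n) * zlam lam a0 a1 a2.

(* Main.v *)
Require Import Defs.
From HB Require Import structures.
From mathcomp Require Import all_boot all_order all_algebra.
From mathcomp Require Import all_classical all_reals all_analysis.
From mathcomp Require Import ring lra zify.
Import Order.TTheory GRing.Theory Num.Theory.
Set Implicit Arguments. Unset Strict Implicit. Unset Printing Implicit Defensive.
Local Open Scope ring_scope.
Local Open Scope classical_set_scope.

Definition evT {T : numFieldType} (t : T) (x : Qlam) : T :=
  ratr (q0 x) + ratr (q1 x) * t + ratr (q2 x) * t ^+ 2.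

Lemma cubic_mul (T : comPzRingType) (t x0 x1 x2 y0 y1 y2 : T) :
  t ^+ 3 + t ^+ 2 + t - 1 = 0 ->
  (x0*y0 + (x1*y2+x2*y1) - x2*y2) + ((x0*y1 + x1*y0) - (x1*y2+x2*y1) + 2 * (x2*y2)) * t
   + ((x0*y2+x1*y1+x2*y0) - (x1*y2+x2*y1)) * t^+2 =
  (x0 + x1*t + x2*t^+2) * (y0 + y1*t + y2*t^+2).
Proof.
move=> h.
apply/eqP; rewrite -subr_eq0; apply/eqP.
transitivity (- ((x1*y2+x2*y1) + (x2*y2) * (t - 1)) * (t ^+ 3 + t ^+ 2 + t - 1)); last by rewrite h mulr0.
ring.
Qed.

Lemma evT_mul (T : numFieldType) (t : T) x y : t ^+ 3 + t ^+ 2 + t - 1 = 0 ->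
  evT t (ql_mul x y) = evT t x * evT t y.
Proof.
move=> h; rewrite /evT /ql_mul /=.
by rewrite !(rmorphD, rmorphB, rmorphM, rmorphN, rmorph1) /= -cubic_mul //; ring.
Qed.

Lemma evT_one (T : numFieldType) (t : T) : evT t ql_one = 1.
Proof. by rewrite /evT /= rmorph1 !rmorph0 !mul0r !addr0. Qed.

Lemma evT_sub (T : numFieldType) (t : T) x y : evT t (ql_sub x y) = evT t x - evT t y.
Proof. rewrite /evT /= !rmorphB /=; ring. Qed.

Lemma evT_pow (T : numFieldType) (t : T) x n : t ^+ 3 + t ^+ 2 + t - 1 = 0 ->
  evT t (ql_pow x n) = evT t x ^+ n.
Proof.
move=> h; elim: n => [|n IH]; first by rewrite expr0 evT_one.
by rewrite /ql_pow iterS -/(ql_pow x n) evT_mul // IH exprS.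
Qed.

Lemma evT_omega (T : numFieldType) (t : T) : t ^+ 3 + t ^+ 2 + t - 1 = 0 ->
  evT t ql_omega = t ^+ 3.
Proof.
move=> h; rewrite /evT /= rmorph1 rmorphN rmorph1.
by apply/eqP; rewrite -subr_eq0 -oppr_eq0 -h; apply/eqP; ring.
Qed.

Lemma ql_lmulE x : ql_lmul x = ql_mul (QL 0 1 0) x.
Proof. by rewrite /ql_lmul /ql_mul /=; congr QL; ring. Qed.

Lemma evT_lmul (T : numFieldType) (t : T) x : t ^+ 3 + t ^+ 2 + t - 1 = 0 ->
  evT t (ql_lmul x) = t * evT t x.
Proof.
move=> h; rewrite ql_lmulE evT_mul //; congr (_ * _).
by rewrite /evT /= rmorph1 !rmorph0; ring.
Qed.

Lemma rat_root_int (x : rat) (a b c : int) :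
  x ^+ 3 + a%:~R * x ^+ 2 + b%:~R * x + c%:~R = 0 -> x \is a Num.int.
Proof.
move=> h; rewrite Qint_def.
set n := numq x; set d := denq x.
have key : n ^+ 3 = - (d * (a * n ^+ 2 + b * n * d + c * d ^+ 2)).
  apply/eqP; rewrite -(eqr_int rat) ?rmorphN !(rmorphD, rmorphM, rmorphXn) /= numqE.
  apply/eqP; apply/eqP; rewrite -subr_eq0; apply/eqP.
  transitivity ((d%:~R) ^+ 3 * (x ^+ 3 + a%:~R * x ^+ 2 + b%:~R * x + c%:~R) : rat);
    last by rewrite h mulr0.
  ring.
have dv : (`|d| %| `|n| ^ 3)%N.
  by rewrite -abszX key abszN abszM dvdn_mulr.
have cop : coprime (`|n| ^ 3) `|d| by rewrite coprimeXl // coprime_num_den.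
have : (`|d| %| 1)%N by rewrite -(eqP cop) dvdn_gcd dv dvdnn.
rewrite dvdn1 => /eqP hd; apply/eqP.
have : (`|d|%:Z = d) by rewrite absz_denq.
by rewrite hd => <-.
Qed.

Lemma no_rat_root1 (l : rat) : l ^+ 3 + l ^+ 2 + l - 1 != 0.
Proof.
apply/negP => /eqP h.
have : l \is a Num.int.
  apply: (@rat_root_int l 1 1 (-1)); rewrite -h; ring.
move=> /intrP [z hz]; move: h; rewrite hz.
have -> : (z%:~R : rat) ^+ 3 + z%:~R ^+ 2 + z%:~R - 1 = (z ^+ 3 + z ^+ 2 + z - 1)%:~R.
  by rewrite !(rmorphD, rmorphB, rmorphXn) /=.
move/eqP; rewrite intr_eq0 => /eqP; rewrite !exprS expr0 !mulr1 => hz3.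
have [hz0|hz0] : ((z <= 0) \/ (1 <= z))%R by lia.
  have : (0 <= z * z)%R by nia.
  nia.
nia.
Qed.

Lemma no_rat_root2 (l : rat) : l ^+ 3 + 2 * l ^+ 2 + 2 * l + 2 != 0.
Proof.
apply/negP => /eqP h.
have : l \is a Num.int.
  apply: (@rat_root_int l 2 2 2); rewrite -h; ring.
move=> /intrP [z hz]; move: h; rewrite hz.
have -> : (z%:~R : rat) ^+ 3 + 2 * z%:~R ^+ 2 + 2 * z%:~R + 2 = (z ^+ 3 + 2 * z ^+ 2 + 2 * z + 2)%:~R.
  by rewrite !(rmorphD, rmorphM, rmorphXn) /=.
move/eqP; rewrite intr_eq0 => /eqP; rewrite !exprS expr0 !mulr1 => hz3.
have [hz0|[hz0|hz0]] : ((0 <= z) \/ (z = -1) \/ (z <= -2))%R by lia.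
- have : (0 <= z * z)%R by nia.
  nia.
- subst z; move: hz3; rewrite /=; lia.
- have : (0 <= z * z)%R by nia.
  nia.
Qed.

Lemma lam_irr (R : realType) (lam : R) : lam ^+ 3 + lam ^+ 2 + lam - 1 = 0 ->
  forall l : rat, lam <> ratr l.
Proof.
move=> h l hl; have := no_rat_root1 l.
by rewrite -(fmorph_eq0 (@ratr R)) !(rmorphD, rmorphB, rmorphXn, rmorphN, rmorph1) /= -hl h eqxx.
Qed.

Lemma ev0 (R : realType) (lam : R) x : lam ^+ 3 + lam ^+ 2 + lam - 1 = 0 ->
  evT lam x = 0 -> x = QL 0 0 0.
Proof.
move=> h; case: x => r0 r1 r2; rewrite /evT /= => hev.
have irr := lam_irr h.
have [r2z|r2nz] := eqVneq r2 0.
  subst r2; move: hev; rewrite rmorph0 mul0r addr0 => hev.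
  have [r1z|r1nz] := eqVneq r1 0.
    subst r1; move: hev; rewrite rmorph0 mul0r addr0 => /eqP.
    by rewrite fmorph_eq0 => /eqP ->.
  exfalso; apply: (irr (- r0 / r1)).
  have hr1 : (ratr r1 : R) != 0 by rewrite fmorph_eq0.
  apply: (mulfI hr1); rewrite !(rmorphM, rmorphN, fmorphV) /=.
  apply/eqP; rewrite -subr_eq0 -hev; apply/eqP; field; exact: hr1.
have hr2 : (ratr r2 : R) != 0 by rewrite fmorph_eq0.
set p := - r1 / r2; set q := - r0 / r2.
have e2 : lam ^+ 2 = ratr p * lam + ratr q.
  apply: (mulfI hr2); rewrite /p /q !(rmorphM, rmorphN, fmorphV) /=.
  apply/eqP; rewrite -subr_eq0 -hev; apply/eqP; field; exact: hr2.
have e3 : ratr (p ^+ 2 + q + p + 1) * lam + ratr (p * q + q - 1) = 0 :> R.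
  transitivity ((lam ^+ 3 + lam ^+ 2 + lam - 1) - (lam + ratr p + 1) * (lam ^+ 2 - ratr p * lam - ratr q)).
    rewrite !(rmorphD, rmorphB, rmorphM, rmorphXn, rmorph1) /=; ring.
  by rewrite h e2; ring.
have [c1z|c1nz] := eqVneq (p ^+ 2 + q + p + 1) 0.
  move: e3; rewrite c1z rmorph0 mul0r add0r => /eqP; rewrite fmorph_eq0 => /eqP c0z.
  exfalso; have := no_rat_root2 p.
  suff -> : p ^+ 3 + 2 * p ^+ 2 + 2 * p + 2 = 0 by rewrite eqxx.
  transitivity ((p + 1) * (p ^+ 2 + q + p + 1) - (p * q + q - 1)); first by ring.
  by rewrite c1z c0z; ring.
exfalso; apply: (irr (- (p * q + q - 1) / (p ^+ 2 + q + p + 1))).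
have hc : (ratr (p ^+ 2 + q + p + 1) : R) != 0 by rewrite fmorph_eq0.
apply: (mulfI hc); rewrite (rmorphM _ (- _)) fmorphV rmorphN /=.
apply/eqP; rewrite -subr_eq0 -e3; apply/eqP; by rewrite mulrCA divff // mulr1 opprK.
Qed.

Lemma ev_inj (R : realType) (lam : R) x y : lam ^+ 3 + lam ^+ 2 + lam - 1 = 0 ->
  evT lam x = evT lam y -> x = y.
Proof.
move=> h e; have := ev0 h (_ : evT lam (ql_sub x y) = 0).
rewrite evT_sub e subrr => /(_ erefl).
case: x {e} => x0 x1 x2; case: y => y0 y1 y2 [] /eqP; rewrite subr_eq0 => /eqP ->.
by move/eqP; rewrite subr_eq0 => /eqP -> /eqP; rewrite subr_eq0 => /eqP ->.
Qed.

Definition colv (x : Qlam) : 'cV[rat]_3 := \col_i ql_coord i x.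
Definition ofcol (v : 'cV[rat]_3) : Qlam := QL (v 0 0) (v 1 0) (v 2 0).

Lemma ofcolK x : ofcol (colv x) = x.
Proof. by case: x => a b c; rewrite /ofcol /colv !mxE. Qed.

Lemma colvK v : colv (ofcol v) = v.
Proof.
apply/matrixP => i j; rewrite !mxE /ql_coord /ofcol /= (ord1 j).
by case: i => [[|[|[|//]]] ?] /=; congr (v _ _); apply: val_inj.
Qed.

Lemma mulmx_colv x y : ql_mulmx x *m colv y = colv (ql_mul x y).
Proof.
apply/matrixP => i j; rewrite !mxE !big_ord_recr big_ord0 /= !mxE /ql_coord /=.
by case: i => [[|[|[|//]]] ?] /=; ring.
Qed.

Definition isZv (v : 'cV[rat]_3) := forall i, v i 0 \is a Num.int.
Definition fracv (v : 'cV[rat]_3) : 'cV[rat]_3 := \col_i rfrac (v i 0).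
Definition toQ m n (B : 'M[int]_(m, n)) : 'M[rat]_(m, n) := map_mx (fun z : int => z%:~R) B.

Lemma toQM m n p (B : 'M[int]_(m, n)) (C : 'M[int]_(n, p)) : toQ (B *m C) = toQ B *m toQ C.
Proof. exact: map_mxM. Qed.

Lemma toQ1 n : toQ (1%:M : 'M[int]_n) = 1%:M.
Proof. exact: map_mx1. Qed.

Lemma isZvB u v : isZv u -> isZv v -> isZv (u - v).
Proof. by move=> hu hv i; rewrite !mxE rpredB. Qed.

Lemma isZvM (B : 'M[int]_3) v : isZv v -> isZv (toQ B *m v).
Proof.
move=> hv i; rewrite mxE; apply: rpred_sum => j _.
by rewrite mxE rpredM ?intr_int.
Qed.

Lemma isZv_toQ (z : 'cV[int]_3) : isZv (toQ z).
Proof. by move=> i; rewrite mxE intr_int. Qed.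

Lemma fracv_sub v : isZv (v - fracv v).
Proof.
by move=> i; rewrite !mxE /rfrac opprB addrC subrK intr_int.
Qed.

Lemma fracv_eq v w : isZv (v - w) -> fracv v = fracv w.
Proof.
move=> h; apply/matrixP => i j; rewrite !mxE /rfrac.
have hz := h i; rewrite !mxE in hz.
have -> : v i 0 = w i 0 + (v i 0 - w i 0) by ring.
rewrite floorDrz // intrD (floorK hz); ring.
Qed.


Lemma small_frac_int (x d : int) : d != 0 -> (`|x| < `|d|)%N ->
  (x%:~R / d%:~R : rat) \is a Num.int -> x = 0.
Proof.
move=> dn xl /intrP [m hm].
have e : x = m * d.
  apply: (@intr_inj rat); rewrite intrM -hm mulfVK //.
  by rewrite intr_eq0.
move: xl; rewrite e abszM.
move=> hl; have : (`|m| = 0)%N by nia.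
by move/eqP; rewrite absz_eq0 => /eqP ->; rewrite mul0r.
Qed.

Lemma modz_bound (z d : int) : d != 0 ->
  (absz (z %% d)%Z < absz d)%N /\ (absz (z %% d)%Z)%:Z = (z %% d)%Z.
Proof.
move=> dn; have h0 := modz_ge0 z dn; have h1 := ltz_mod z dn.
split; last by rewrite gez0_abs.
by rewrite -ltz_nat gez0_abs // -abszE.
Qed.

Lemma frac_step (u : rat) (d : int) : d != 0 -> d%:~R * u \is a Num.int ->
  u - ((Num.floor (d%:~R * u)) %% d)%Z%:~R / d%:~R \is a Num.int.
Proof.
move=> dn hi; set z := Num.floor _.
have hz : z%:~R = d%:~R * u by rewrite floorK.
have hd : (d%:~R : rat) != 0 by rewrite intr_eq0.
have -> : u = z%:~R / d%:~R by rewrite hz; field.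
rewrite {1}(divz_eq z d) intrD intrM.
have -> : ((z %/ d)%Z%:~R * d%:~R + (z %% d)%Z%:~R) / d%:~R - (z %% d)%Z%:~R / d%:~R
   = (z %/ d)%Z%:~R :> rat by field.
exact: intr_int.
Qed.

Lemma diff_bound (x y d : int) : 0 <= x -> 0 <= y -> (`|x| < `|d|)%N -> (`|y| < `|d|)%N ->
  (`|x - y| < `|d|)%N.
Proof. move=> *; lia. Qed.

Lemma lattice_count (A : 'M[int]_3) : \det A != 0 ->
  exists s : seq 'cV[rat]_3,
    [/\ uniq s, size s = `|\det A|%N &
        forall v, v \in s <-> exists w, isZv (toQ A *m w) /\ v = fracv w].
Proof.
move=> dA.
have [L uL [Rm uR [d _ eA]]] := int_Smith_normal_form A.
set D := \matrix_(i, j) _ in eA.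
pose dd (i : 'I_3) : int := d`_i.
have eD : D = diag_mx (\row_i dd i) by apply/matrixP => i j; rewrite !mxE.
have detA : \det A = \det L * (dd 0 * dd 1 * dd 2) * \det Rm.
  rewrite eA !det_mulmx eD det_diag !big_ord_recr big_ord0 /= !mxE mul1r.
  by [].
have hd : forall i, dd i != 0.
  move=> i; apply/negP => /eqP h0; move: dA; rewrite detA.
  have [ei|[ei|ei]] : i = 0 \/ i = 1 \/ i = 2.
    by clear h0; case: i => [[|[|[|//]]] ?]; [left|right;left|right;right]; apply: val_inj.
  1,2,3: by subst i; rewrite h0 ?(mulr0, mul0r) eqxx.
have hL : `|\det L|%N = 1%N.
  by move: uL; rewrite unitmxE => /orP [] /eqP ->.
have hR : `|\det Rm|%N = 1%N.
  by move: uR; rewrite unitmxE => /orP [] /eqP ->.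
pose n0 := absz (dd 0); pose n1 := absz (dd 1); pose n2 := absz (dd 2).
have dAe : `|\det A|%N = (n0 * n1 * n2)%N.
  by rewrite detA !abszM hL hR mul1n muln1.
pose I := ('I_n0 * 'I_n1 * 'I_n2)%type.
pose kz (k : I) (i : 'I_3) : int :=
  if nat_of_ord i == 0%N then (k.1.1 : nat)%:Z else if nat_of_ord i == 1%N then (k.1.2 : nat)%:Z
  else (k.2 : nat)%:Z.
have kzb : forall k i, (0 <= kz k i) && (`|kz k i| < `|dd i|)%N.
  move=> [[a b] c] i; rewrite /kz.
  case: i => [[|[|[|//]]] ?] /=.
  - by rewrite (_ : dd _ = dd 0) ?ltn_ord //; congr dd; apply: val_inj.
  - by rewrite (_ : dd _ = dd 1) ?ltn_ord //; congr dd; apply: val_inj.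
  - by rewrite (_ : dd _ = dd 2) ?ltn_ord //; congr dd; apply: val_inj.
pose kvec (k : I) : 'cV[rat]_3 := \col_i ((kz k i)%:~R / (dd i)%:~R).
pose kcol (k : I) : 'cV[int]_3 := \col_i kz k i.
pose Ri := invmx Rm.
have RRi : toQ Rm *m toQ Ri = 1%:M by rewrite -toQM mulmxV // toQ1.
have RiR : toQ Ri *m toQ Rm = 1%:M by rewrite -toQM mulVmx // toQ1.
have LiL : toQ (invmx L) *m toQ L = 1%:M by rewrite -toQM mulVmx // toQ1.
have Dv : forall v, toQ D *m v = \col_i ((dd i)%:~R * v i 0).
  move=> v; apply/matrixP => i j; rewrite !mxE (bigD1 i) //= big1 => [|k nk].
    by rewrite eD !mxE eqxx mulr1n addr0 (ord1 j).
  by rewrite eD !mxE eq_sym (negbTE nk) mulr0n mul0r.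
have Dk : forall k, toQ D *m kvec k = toQ (kcol k).
  move=> k; rewrite Dv; apply/matrixP => i j; rewrite !mxE mulrC divfK //.
  by rewrite intr_eq0.
pose s := [seq fracv (toQ Ri *m kvec k) | k <- enum {: I}].
have AQ : toQ A = toQ L *m toQ D *m toQ Rm by rewrite eA !toQM.
exists s; split.
- rewrite map_inj_in_uniq ?enum_uniq // => k k' _ _ e.
  have h1 : isZv (toQ Ri *m kvec k - toQ Ri *m kvec k').
    have -> : toQ Ri *m kvec k - toQ Ri *m kvec k' =
      (toQ Ri *m kvec k - fracv (toQ Ri *m kvec k)) - (toQ Ri *m kvec k' - fracv (toQ Ri *m kvec k')).
      by rewrite e; apply/matrixP => i j; rewrite !mxE; ring.
    by apply: isZvB; apply: fracv_sub.
  have h2 : isZv (kvec k - kvec k').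
    have -> : kvec k - kvec k' = toQ Rm *m (toQ Ri *m kvec k - toQ Ri *m kvec k').
      by rewrite mulmxBr !mulmxA RRi !mul1mx.
    exact: isZvM.
  have eqi : forall i, kz k i = kz k' i.
    move=> i; have := h2 i; rewrite !mxE -mulrBl -intrB => hi.
    apply/eqP; rewrite -subr_eq0; apply/eqP; apply: (small_frac_int (hd i)) hi.
    have /andP [a1 a2] := kzb k i; have /andP [b1 b2] := kzb k' i.
    exact: diff_bound.
  move: k k' eqi {e h1 h2} => [[a b] c] [[a' b'] c'] eqi.
  have e0 := eqi 0; have e1 := eqi 1; have e2 := eqi 2.
  rewrite /kz /= in e0 e1 e2.
  case: e0 => /val_inj ->; case: e1 => /val_inj ->; by case: e2 => /val_inj ->.
- by rewrite size_map -cardE card_prod card_prod !card_ord dAe.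
- move=> v; split.
    move=> /mapP [k _ ->]; exists (toQ Ri *m kvec k); split => //.
    rewrite AQ -!mulmxA (mulmxA (toQ Rm)) RRi mul1mx Dk.
    by apply: isZvM; apply: isZv_toQ.
  move=> [w [hw ->]].
  have [u eu] : {u | u = toQ Rm *m w} by exists (toQ Rm *m w).
  have hb : isZv (toQ D *m u).
    have -> : toQ D *m u = toQ (invmx L) *m (toQ A *m w).
      by rewrite eu AQ -!mulmxA [RHS]mulmxA LiL mul1mx.
    exact: isZvM.
  have hbi : forall i, (dd i)%:~R * u i 0 \is a Num.int.
    by move=> i; have := hb i; rewrite Dv mxE.
  pose kk (i : 'I_3) := modz (Num.floor ((dd i)%:~R * u i 0)) (dd i).
  have [p0 q0] := modz_bound (Num.floor ((dd 0)%:~R * u 0 0)) (hd 0).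
  have [p1 q1] := modz_bound (Num.floor ((dd 1)%:~R * u 1 0)) (hd 1).
  have [p2 q2] := modz_bound (Num.floor ((dd 2)%:~R * u 2 0)) (hd 2).
  pose k : I := (Ordinal p0, Ordinal p1, Ordinal p2).
  have kzk : forall i, kz k i = kk i.
    move=> i; rewrite /kz /=.
    by case: i => [[|[|[|//]]] ?] /=; [rewrite q0|rewrite q1|rewrite q2]; rewrite /kk;
      congr (modz (Num.floor (_%:~R * u _ 0)) _); try (congr dd); apply: val_inj.
  have hu : isZv (u - kvec k).
    move=> i; rewrite 2!mxE [kvec k i 0]mxE kzk.
    exact: (frac_step (hd i) (hbi i)).
  have hw2 : isZv (w - toQ Ri *m kvec k).
    have -> : w - toQ Ri *m kvec k = toQ Ri *m (u - kvec k).
      by rewrite mulmxBr eu mulmxA RiR mul1mx.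
    exact: isZvM.
  apply/mapP; exists k; first by rewrite mem_enum.
  exact: fracv_eq.
Qed.

From mathcomp Require Import complex.
Section ComplexPart.
Local Open Scope complex_scope.
Local Open Scope ring_scope.

Lemma sum_coord (T : numFieldType) (t : T) y :
  \sum_(k < 3) t ^+ k * ratr (ql_coord k y) = evT t y.
Proof. by rewrite !big_ord_recr big_ord0 /= /evT /ql_coord /= add0r expr0 mul1r expr1 !(mulrC t) (mulrC (t ^+ 2)). Qed.

Lemma evT_iter (T : numFieldType) (t : T) x j : t ^+ 3 + t ^+ 2 + t - 1 = 0 ->
  evT t (iter j ql_lmul x) = t ^+ j * evT t x.
Proof.
move=> h; elim: j => [|j IH]; first by rewrite expr0 mul1r.
by rewrite iterS evT_lmul // IH exprS mulrA.
Qed.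

Lemma ratrC (R : rcfType) (r : rat) : ratr r = (ratr r : R)%:C :> R[i].
Proof. by rewrite -(fmorph_rat (real_complex R)). Qed.

Lemma evTC (R : rcfType) (t : R) x : evT (t%:C) x = (evT t x)%:C.
Proof. by rewrite /evT !ratrC !(rmorphD, rmorphM, rmorphXn). Qed.

Lemma norm_gen (R : rcfType) (lam : R) (mu : R[i]) x :
  lam ^+ 3 + lam ^+ 2 + lam - 1 = 0 -> mu ^+ 3 + mu ^+ 2 + mu - 1 = 0 ->
  lam%:C != mu -> lam%:C != conjc mu -> mu != conjc mu ->
  (ratr (ql_norm x) : R)%:C = (evT lam x)%:C * evT mu x * evT (conjc mu) x.
Proof.
move=> hl hm d1 d2 d3.
have hmc : conjc mu ^+ 3 + conjc mu ^+ 2 + conjc mu - 1 = 0.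
  have := congr1 (@conjc R) hm; rewrite !(rmorphD, rmorphB, rmorphXn, rmorphN, rmorph1) => ->.
  by apply/eqP; rewrite eq_complex /= oppr0 !eqxx.
have hlc : lam%:C ^+ 3 + lam%:C ^+ 2 + lam%:C - 1 = 0 :> R[i].
  have := congr1 (real_complex R) hl; rewrite !(rmorphD, rmorphB, rmorphXn, rmorphN, rmorph1) => ->.
  by [].

pose ts : 'rV[R[i]]_3 := \row_i [:: lam%:C; mu; conjc mu]`_i.
have hts : forall i, ts 0 i ^+ 3 + ts 0 i ^+ 2 + ts 0 i - 1 = 0.
  by move=> i; rewrite mxE; case: i => [[|[|[|//]]] ?] /=.
pose Qc := (Vandermonde 3 ts)^T.
pose Mx := map_mx (fun r : rat => (ratr r : R[i])) (ql_mulmx x).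
pose Bc := diag_mx (\row_i evT (ts 0 i) x).
have key : Qc *m Mx = Bc *m Qc.
  apply/matrixP => i j; rewrite mul_diag_mx !mxE.
  under eq_bigr => k _ do rewrite !mxE.
  rewrite sum_coord evT_iter; first exact: mulrC.
  by have := hts i; rewrite mxE.
have dQ : \det Qc != 0.
  rewrite det_tr det_Vandermonde; apply/prodf_neq0 => i _; apply/prodf_neq0 => j ij.
  rewrite subr_eq0 !mxE.
  by case: i j ij => [[|[|[|//]]] ?] [[|[|[|//]]] ?] //= _; rewrite eq_sym.
have := congr1 determinant key; rewrite !det_mulmx mulrC => /(mulIf dQ).
rewrite det_map_mx => e; rewrite /ql_norm -ratrC.
transitivity (\det Bc); first exact: e.
by rewrite det_diag !big_ord_recr big_ord0 /= !mxE /= mul1r evTC.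
Qed.

Lemma mulCE (R : rcfType) (a b c d : R) :
  (Complex a b) * (Complex c d) = Complex (a * c - b * d) (a * d + b * c).
Proof. by []. Qed.
Lemma addCE (R : rcfType) (a b c d : R) :
  (Complex a b) + (Complex c d) = Complex (a + c) (b + d).
Proof. by []. Qed.
Lemma realCE (R : rcfType) (a : R) : a%:C = Complex a 0.
Proof. by []. Qed.
Lemma conjCE (R : rcfType) (a b : R) : conjc (Complex a b) = Complex a (- b).
Proof. by []. Qed.

Section Concrete.
Variables (R : realType) (lam : R).
Hypothesis hl : lam ^+ 3 + lam ^+ 2 + lam - 1 = 0.

Lemma lam_e : lam * (lam ^+ 2 + lam + 1) = 1.
Proof. by apply/eqP; rewrite -subr_eq0 -hl; apply/eqP; ring. Qed.

Lemma lam_pos : 0 < lam.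
Proof.
have := lam_e; rewrite ltNge; move=> e; apply/negP => hle.
have h2 : 0 < lam ^+ 2 + lam + 1.
  have : 0 <= (lam + 2^-1) ^+ 2 by apply: sqr_ge0.
  move=> hh; have -> : lam ^+ 2 + lam + 1 = (lam + 2^-1) ^+ 2 + 3/4 by field.
  by apply: ltr_wpDl.
have : lam * (lam ^+ 2 + lam + 1) <= 0 by apply: mulr_le0_ge0 => //; apply: ltW.
by rewrite e ler10.
Qed.

Lemma lam_lt1 : lam < 1.
Proof.
have := lam_e; rewrite ltNge; move=> e; apply/negP => hle.
have : 3 <= lam * (lam ^+ 2 + lam + 1).
  rewrite -[3]mul1r; apply: ler_pM => //.
  rewrite !expr2; nra.
rewrite e => h3; lra.
Qed.

Lemma lamV : lam^-1 = 1 + lam + lam ^+ 2.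
Proof.
have h0 : lam != 0 by rewrite gt_eqF // lam_pos.
apply: (mulfI h0); rewrite mulfV //.
by transitivity (lam * (lam ^+ 2 + lam + 1)); [rewrite lam_e | ring].
Qed.
Lemma mu_exists : exists mu : R[i],
  [/\ mu ^+ 3 + mu ^+ 2 + mu - 1 = 0, Im mu != 0,
     mu * conjc mu = (lam^-1)%:C & mu + conjc mu = (- (1 + lam))%:C].
Proof.
have lp := lam_pos; have l1 := lam_lt1.
pose a := - (1 + lam) / 2.
have hpos : 0 < lam^-1 - a ^+ 2.
  rewrite lamV /a; rewrite !expr2.
  have -> : 1 + lam + lam * lam - - (1 + lam) / 2 * (- (1 + lam) / 2)
     = (3 + 2 * lam + 3 * lam * lam) / 4 by field.
  apply: divr_gt0 => //; nra.
pose b := Num.sqrt (lam^-1 - a ^+ 2).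
have bp : 0 < b by rewrite sqrtr_gt0.
have b2 : b ^+ 2 = lam^-1 - a ^+ 2 by rewrite sqr_sqrtr // ltW.
exists (Complex a b).
have P : Complex a b * conjc (Complex a b) = (lam^-1)%:C.
  rewrite conjCE mulCE realCE; congr Complex; last by ring.
  by rewrite -(subrK (a ^+ 2) lam^-1) -b2; ring.
have S : Complex a b + conjc (Complex a b) = (- (1 + lam))%:C.
  rewrite conjCE addCE realCE; congr Complex; last by ring.
  by rewrite /a; field.
split => //; last by rewrite /= gt_eqF.
set mu := Complex a b in P S *.
have E1 : (- (1 + lam))%:C = - (1 + lam%:C) :> R[i] by rewrite rmorphN rmorphD rmorph1.
rewrite E1 in S.
have q : mu ^+ 2 + (1 + lam%:C) * mu + (lam^-1)%:C = 0.
  rewrite -P -[1 + lam%:C]opprK -S; ring.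
have K : (lam^-1)%:C = 1 + lam%:C + lam%:C ^+ 2 :> R[i].
  by rewrite lamV !rmorphD rmorph1 rmorphXn.
have LK : lam%:C * (lam^-1)%:C = 1 :> R[i].
  by rewrite -rmorphM mulfV ?rmorph1 // gt_eqF.
transitivity ((mu - lam%:C) * (mu ^+ 2 + (1 + lam%:C) * mu + (lam^-1)%:C)
   + (1 - (lam^-1)%:C + lam%:C + lam%:C ^+ 2) * mu + (lam%:C * (lam^-1)%:C - 1)).
  ring.
by rewrite q LK K; ring.
Qed.

Lemma evT_alpha (T : numFieldType) (t : T) n : t ^+ 3 + t ^+ 2 + t - 1 = 0 ->
  evT t (ql_sub ql_one (ql_pow ql_omega n)) = 1 - (t ^+ 3) ^+ n.
Proof. by move=> h; rewrite evT_sub evT_one evT_pow // evT_omega. Qed.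

Lemma zpow (rho th : R) n :
  (Complex (rho * cos th) (rho * sin th)) ^+ n =
  Complex (rho ^+ n * cos (n%:R * th)) (rho ^+ n * sin (n%:R * th)).
Proof.
elim: n => [|n IH].
  by rewrite expr0 mul0r cos0 sin0 expr0 mulr1 mulr0.
rewrite exprSr IH mulCE mulrSr mulrDl mul1r cosD sinD exprSr; congr Complex; ring.
Qed.

Lemma norm_complex (theta : R) (htheta : 0 < theta < pi)
  (hcos : cos theta = 2^-1 * Num.sqrt (lam ^+ 3) * (5 - lam ^+ 3)) (n : nat) :
  ratr (ql_norm (ql_sub ql_one (ql_pow ql_omega n))) =
  (1 - (lam ^+ 3) ^+ n) *
  (1 - 2 * (Num.sqrt (lam ^+ 3))^-1 ^+ n * cos (n%:R * theta) + (Num.sqrt (lam ^+ 3))^-1 ^+ (2 * n)).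
Proof.
have lp := lam_pos; have l1 := lam_lt1.
have [mu [hm hIm P S]] := mu_exists.
have d1 : lam%:C != mu.
  by apply/negP => /eqP e; move: hIm; rewrite -e /= eqxx.
have d2 : lam%:C != conjc mu.
  apply/negP => /eqP e; move: hIm; case: mu {hm P S d1} e => a b /= [_] e.
  by rewrite -oppr_eq0 -e eqxx.
have d3 : mu != conjc mu.
  apply/negP => /eqP e; move: hIm; case: mu {hm P S d1 d2} e => a b /= [] e.
  move=> hb; have b0 : b = 0 by lra.
  by move: hb; rewrite b0 eqxx.
have hmc : conjc mu ^+ 3 + conjc mu ^+ 2 + conjc mu - 1 = 0.
  have := congr1 (@conjc R) hm; rewrite !(rmorphD, rmorphB, rmorphXn, rmorphN, rmorph1) => ->.
  by apply/eqP; rewrite eq_complex /= oppr0 !eqxx.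
have := norm_gen (ql_sub ql_one (ql_pow ql_omega n)) hl hm d1 d2 d3.
rewrite !evT_alpha //.
set w := mu ^+ 3.
have cw : conjc mu ^+ 3 = conjc w by rewrite rmorphXn.
rewrite cw => e.
have WP : w * conjc w = ((lam^-1) ^+ 3)%:C.
  by rewrite -cw -exprMn P rmorphXn.
have hlc : lam%:C ^+ 3 + lam%:C ^+ 2 + lam%:C - 1 = 0 :> R[i].
  have := congr1 (real_complex R) hl; rewrite !(rmorphD, rmorphB, rmorphXn, rmorphN, rmorph1) => ->.
  by [].
have WS : w + conjc w = (5 - lam ^+ 3)%:C.
  have K : (lam^-1)%:C = 1 + lam%:C + lam%:C ^+ 2 :> R[i].
    by rewrite lamV !rmorphD rmorph1 rmorphXn.
  have E1 : (- (1 + lam))%:C = - (1 + lam%:C) :> R[i] by rewrite rmorphN rmorphD rmorph1.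
  transitivity ((mu + conjc mu) ^+ 3 - 3 * (mu * conjc mu) * (mu + conjc mu)).
    by rewrite -cw /w; ring.
  rewrite S P E1 K rmorphB rmorphXn (rmorph_nat (real_complex R) 5).
  apply/eqP; rewrite -subr_eq0; apply/eqP.
  transitivity (3 * (lam%:C ^+ 3 + lam%:C ^+ 2 + lam%:C - 1) : R[i]); first by ring.
  by rewrite hlc mulr0.
have [p [q Ew]] : exists p q, w = Complex p q by case: (w) => p q; exists p, q.
rewrite Ew conjCE addCE mulCE !realCE in WS WP; case: WS => hp _; case: WP => hpq _.
set sq := Num.sqrt (lam ^+ 3).
have l3 : 0 < lam ^+ 3 by rewrite exprn_gt0.
have sp : 0 < sq by rewrite sqrtr_gt0.
have s2 : sq ^+ 2 = lam ^+ 3 by rewrite sqr_sqrtr // ltW.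
have hc : cos theta = sq * p by rewrite hcos -/sq; apply/eqP; rewrite -hp; apply/eqP; field.
have hsin : 0 < sin theta by apply: sin_gt0_pi.
have hs : sin theta = sq * `|q|.
  apply/eqP; rewrite -(@eqrXn2 _ 2) //; last by rewrite mulr_ge0 // ltW.
  rewrite sin2cos2 hc !exprMn (real_normK (num_real q)) s2.
  have e3 : lam ^+ 3 * (lam^-1) ^+ 3 = 1 by rewrite -exprMn mulfV ?expr1n // gt_eqF.
  apply/eqP; rewrite -e3 -hpq; ring.
  by apply: ltW.
set rho := sq^-1.
have rc : rho * cos theta = p by rewrite hc /rho mulrA mulVf ?mul1r // gt_eqF.
have rs : rho * sin theta = `|q| by rewrite hs /rho mulrA mulVf ?mul1r // gt_eqF.
set z := Complex (rho * cos theta) (rho * sin theta).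
have swap : (1 - w ^+ n) * (1 - conjc w ^+ n) = (1 - z ^+ n) * (1 - conjc z ^+ n).
  have [q0|q0] := leP 0 q.
    by have -> : w = z by rewrite Ew /z rc rs ger0_norm.
  have -> : w = conjc z by rewrite Ew /z rc rs conjCE ltr0_norm // opprK.
  by rewrite conjcK mulrC.
apply: (@complexI R); rewrite e -mulrA swap.
have -> : conjc z ^+ n = conjc (z ^+ n) by rewrite rmorphXn.
rewrite /z zpow.
set X := rho ^+ n * cos _; set Y := rho ^+ n * sin _.
have -> : (1 - Complex X Y) * (1 - conjc (Complex X Y)) = ((1 - X) ^+ 2 + Y ^+ 2)%:C.
  by rewrite conjCE /=; congr Complex; ring.
rewrite -rmorphM; congr (_%:C); congr (_ * _).
rewrite /X /Y mulnC exprM.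
have := cos2Dsin2 (n%:R * theta); move=> cs.
transitivity (1 - 2 * (rho ^+ n * cos (n%:R * theta)) + (rho ^+ n) ^+ 2 * (cos (n%:R * theta) ^+ 2 + sin (n%:R * theta) ^+ 2)); first by ring.
by rewrite cs mulr1 mulrA.
Qed.
Lemma norm_value (theta : R) (htheta : 0 < theta < pi)
  (hcos : cos theta = 2^-1 * Num.sqrt (lam ^+ 3) * (5 - lam ^+ 3)) (n : nat) (hn : (0 < n)%N) :
  ratr (ql_norm (ql_sub ql_one (ql_pow ql_omega n))) =
    (lam ^+ 3) ^- n - (lam ^+ 3) ^+ n
    - 2 * ((Num.sqrt (lam ^+ 3)) ^- n - (Num.sqrt (lam ^+ 3)) ^+ n) * cos (n%:R * theta)
  /\ 0 < (lam ^+ 3) ^- n - (lam ^+ 3) ^+ n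
    - 2 * ((Num.sqrt (lam ^+ 3)) ^- n - (Num.sqrt (lam ^+ 3)) ^+ n) * cos (n%:R * theta).
Proof.
have lp := lam_pos; have l1 := lam_lt1.
rewrite (norm_complex htheta hcos).
set sq := Num.sqrt (lam ^+ 3).
have l3 : 0 < lam ^+ 3 by rewrite exprn_gt0.
have sp : 0 < sq by rewrite sqrtr_gt0.
have s2 : sq ^+ 2 = lam ^+ 3 by rewrite sqr_sqrtr // ltW.
have s1 : sq < 1.
  have l31 : lam ^+ 3 < 1 by rewrite exprn_ilt1 // ?ltW.
  by rewrite -s2 expr2 in l31; nra.
set S := sq ^+ n.
have Sp : 0 < S by rewrite exprn_gt0.
have S1 : S < 1 by rewrite exprn_ilt1 ?(ltW sp) // -lt0n.
have W : (lam ^+ 3) ^+ n = S ^+ 2 by rewrite -s2 /S -!exprM mulnC.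
have hS : S != 0 by rewrite gt_eqF.
have W1 : lam ^+ 3 ^+ n = S ^+ 2 by rewrite -s2 /S -!exprM mulnC.
have W2 : sq ^+ 2 ^+ n = S ^+ 2 by rewrite /S -!exprM mulnC.
have V : sq^-1 ^+ (2 * n) = S^-1 ^+ 2 by rewrite mulnC exprM exprVn.
have V2 : (lam ^+ 3) ^- n = S^-1 ^+ 2 by rewrite W1 exprVn.
have V3 : sq ^- n = S^-1 by [].
have V4 : sq^-1 ^+ n = S^-1 by rewrite exprVn.
rewrite ?W1 ?W2 ?V ?V2 ?V3 ?V4 -/S.
have c1 := cos_le1 (n%:R * theta).
split; first by field.
set c := cos _ in c1 *.
have T1 : 1 < S^-1 by rewrite invf_gt1.
have -> : (S ^+ 2)^-1 - S ^+ 2 - 2 * (S^-1 - S) * c = (1 - S ^+ 2) * (1 - 2 * S^-1 * c + S^-1 ^+ 2).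
  by field.
apply: mulr_gt0.
  rewrite subr_gt0 expr2; nra.
set T := S^-1 in T1 *.
nra.
Qed.

End Concrete.

End ComplexPart.


Definition qint (x : Qlam) := [&& q0 x \is a Num.int, q1 x \is a Num.int & q2 x \is a Num.int].

Lemma qint_mul x y : qint x -> qint y -> qint (ql_mul x y).
Proof.
case/and3P => h0 h1 h2; case/and3P => k0 k1 k2; rewrite /qint /ql_mul /=.
have two : (2 : rat) \is a Num.int by rewrite natr_int.
rewrite !(rpredD, rpredB, rpredN, rpredM) //; by [exact: h0 | exact: h1 | exact: h2 | exact: k0 | exact: k1 | exact: k2 | exact: two].
Qed.

Lemma qint_sub x y : qint x -> qint y -> qint (ql_sub x y).
Proof.
case/and3P => h0 h1 h2; case/and3P => k0 k1 k2; rewrite /qint /ql_sub /=.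
by rewrite !(rpredB, h0, h1, h2, k0, k1, k2).
Qed.

Lemma qint_one : qint ql_one.
Proof. by apply/and3P; split; [exact: int_num1|exact: int_num0|exact: int_num0]. Qed.

Lemma qint_pow x n : qint x -> qint (ql_pow x n).
Proof.
move=> hx; elim: n => [|n IH]; first exact: qint_one.
by rewrite /ql_pow iterS; apply: qint_mul.
Qed.

Lemma qint_alpha n : qint (ql_sub ql_one (ql_pow ql_omega n)).
Proof.
apply: qint_sub; first exact: qint_one.
apply: qint_pow; apply/and3P; split; [exact: int_num1| |]; rewrite rpredN; exact: int_num1.
Qed.

Lemma qint_lmul x : qint x -> qint (ql_lmul x).
Proof. by move=> hx; rewrite ql_lmulE; apply: qint_mul. Qed.

Lemma qint_coord x i : qint x -> ql_coord i x \is a Num.int.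
Proof. by case/and3P => h0 h1 h2; rewrite /ql_coord; case: ifP => _ //; case: ifP. Qed.

Definition intmx (x : Qlam) : 'M[int]_3 := \matrix_(i, j) Num.floor (ql_mulmx x i j).

Lemma intmxE x : qint x -> toQ (intmx x) = ql_mulmx x.
Proof.
move=> hx; apply/matrixP => i j; rewrite !mxE floorK //.
apply: qint_coord; elim: (nat_of_ord j) => [|k IH] //=.
exact: qint_lmul.
Qed.

Lemma zlamE (R : realType) (lam : R) a0 a1 a2 :
  zlam lam a0 a1 a2 = evT lam (QL a0%:~R a1%:~R a2%:~R).
Proof. by rewrite /zlam /evT /= !ratr_int. Qed.

Lemma in_ideal_sub (R : realType) (lam : R) n m1 m2 q :
  in_ideal lam n m1 -> in_ideal lam n m2 -> (q * m2 <= m1)%N -> in_ideal lam n (m1 - q * m2).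
Proof.
move=> [a0 [a1 [a2 e1]]] [b0 [b1 [b2 e2]]] le.
exists (a0 - q%:Z * b0), (a1 - q%:Z * b1), (a2 - q%:Z * b2).
rewrite natrB // natrM e1 e2 /zlam !(intrB, intrM) /=.
have -> : (q%:Z)%:~R = q%:R :> R by [].
ring.
Qed.

Lemma zlamN (R : realType) (lam : R) a0 a1 a2 :
  zlam lam (- a0) (- a1) (- a2) = - zlam lam a0 a1 a2.
Proof. rewrite /zlam !mulrNz; ring. Qed.

Lemma ql_evalE (R : realType) (lam : R) x : ql_eval lam x = evT lam x.
Proof. by []. Qed.

Unset Implicit Arguments.

Theorem mainTheorem4 (R : realType) (lam theta : R)
  (hlam : lam ^+ 3 + lam ^+ 2 + lam - 1 = 0)
  (htheta : 0 < theta < pi)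
  (hcos : cos theta = 2^-1 * Num.sqrt (lam ^+ 3) * (5 - lam ^+ 3))
  (n : nat) (hn : (0 < n)%N) :
  exists s : seq R,
    [/\ uniq s, [set` s] = I_set lam n,
        (size s)%:R = `| ql_norm (ql_sub ql_one (ql_pow ql_omega n)) | :> rat,
        (size s)%:R = (lam ^+ 3) ^- n - (lam ^+ 3) ^+ n
                      - 2 * ((Num.sqrt (lam ^+ 3)) ^- n - (Num.sqrt (lam ^+ 3)) ^+ n)
                          * cos (n%:R * theta)
      & exists M : nat,
          [/\ (0 < M)%N, in_ideal lam n M,
              (forall k : nat, (0 < k < M)%N -> ~ in_ideal lam n k)
            & (M %| size s)%N]].
Proof.
have hl := hlam.
have lp := lam_pos hl; have l1 := lam_lt1 hl.
have [Nv Npos] := norm_value hl htheta hcos hn.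
set al := ql_sub ql_one (ql_pow ql_omega n) in Nv Npos *.
set F := _ - _ - _ in Nv Npos *.
have hal : qint al := qint_alpha n.
set A := intmx al.
have eA : toQ A = ql_mulmx al := intmxE hal.
have normQ : ql_norm al = (\det A)%:~R by rewrite /ql_norm -eA det_map_mx.
have npos : 0 < ql_norm al by rewrite -(ltr0q R) Nv.
have dA : \det A != 0.
  by apply/negP => /eqP h0; move: npos; rewrite normQ h0 ltxx.
have [sv [su ss hs]] := lattice_count dA.
have ev_al : evT lam al = 1 - (lam ^+ 3) ^+ n := evT_alpha n hl.
have al0 : 1 - (lam ^+ 3) ^+ n != 0.
  have l31 : lam ^+ 3 < 1 by rewrite exprn_ilt1 // ?ltW.
  have : (lam ^+ 3) ^+ n < 1 by rewrite exprn_ilt1 // ?exprn_ge0 ?ltW // -lt0n.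
  by rewrite subr_eq0 eq_sym => /lt_eqF ->.
pose f := fun v : 'cV[rat]_3 => ql_eval lam (ofcol v).
exists (map f sv); split.
- rewrite map_inj_uniq // => v v' e.
  by have := ev_inj hl e => /(congr1 colv); rewrite !colvK.
- apply/seteqP; split => y /=.
  + move=> /mapP [v vin ->]; have [w [hw ->]] := (hs v).1 vin.
    exists (ofcol w).
    set be := ql_mul al (ofcol w).
    have cb : colv be = toQ A *m w by rewrite -mulmx_colv colvK eA.
    have hb := hw; rewrite -cb in hb.
    have hb0 := hb 0; have hb1 := hb 1; have hb2 := hb 2.
    rewrite !mxE /ql_coord /= in hb0 hb1 hb2.
    exists (Num.floor (q0 be)), (Num.floor (q1 be)), (Num.floor (q2 be)); split.
      have ze : zlam lam (Num.floor (q0 be)) (Num.floor (q1 be)) (Num.floor (q2 be)) = evT lam be.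
        by rewrite zlamE !floorK //; case: (be).
      by rewrite ze /be evT_mul // ev_al mulKf.
    by rewrite /f /Pi_f /ofcol /fracv !mxE.
  + move=> [r [a0 [a1 [a2 [hr ->]]]]].
    apply/mapP; exists (fracv (colv r)).
      apply/(hs _).2; exists (colv r); split => //.
      have e : ql_mul al r = QL a0%:~R a1%:~R a2%:~R.
        apply: (ev_inj hl); rewrite evT_mul // ev_al -ql_evalE hr mulrA mulfV // mul1r zlamE.
        by [].
      rewrite eA mulmx_colv e => i; rewrite mxE /ql_coord /=.
      by case: ifP => _; [|case: ifP => _]; exact: intr_int.
    by rewrite /f /Pi_f /ofcol /fracv !mxE.
- by rewrite size_map ss normQ natr_absz intr_norm.
- rewrite size_map ss -(ratr_nat R) natr_absz intr_norm -normQ ratr_norm Nv.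
  by rewrite ger0_norm // ltW.
- rewrite size_map ss.
  set N := `|\det A|%N.
  have NI : in_ideal lam n N.
    pose u : 'cV[rat]_3 := toQ (\adj A) *m colv ql_one.
    have uZ : isZv u.
      apply: isZvM => i; rewrite mxE /ql_coord /=.
      by case: ifP => _; [|case: ifP => _]; rewrite ?int_num0 ?int_num1.
    have e : ql_mul al (ofcol u) = QL (\det A)%:~R 0 0.
      rewrite -[ql_mul _ _]ofcolK -mulmx_colv colvK -eA /u mulmxA -toQM mul_mx_adj.
      rewrite /toQ map_scalar_mx mul_scalar_mx /ofcol !mxE /ql_coord /=.
      by congr QL; rewrite ?mulr1 ?mulr0.
    have ev : (\det A)%:~R = (1 - (lam ^+ 3) ^+ n) * evT lam (ofcol u).
      rewrite -ev_al -evT_mul // e /evT /= ratr_int !rmorph0; ring.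
    have u0 := uZ 0; have u1 := uZ 1; have u2 := uZ 2.
    have ez : evT lam (ofcol u) = zlam lam (Num.floor (u 0 0)) (Num.floor (u 1 0)) (Num.floor (u 2 0)).
      by rewrite zlamE !floorK.
    rewrite ez in ev.
    have [dp|dn] := lerP 0 (\det A).
      exists (Num.floor (u 0 0)), (Num.floor (u 1 0)), (Num.floor (u 2 0)).
      rewrite /N natr_absz intr_norm ger0_norm; last by rewrite ler0z.
      by rewrite ev.
    exists (- Num.floor (u 0 0)), (- Num.floor (u 1 0)), (- Num.floor (u 2 0)).
    rewrite /N natr_absz intr_norm ltr0_norm; last by rewrite ltrz0.
    rewrite ev.
    transitivity ((1 - (lam ^+ 3) ^+ n) * - zlam lam (Num.floor (u 0 0)) (Num.floor (u 1 0)) (Num.floor (u 2 0))); first by ring.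
    by congr (_ * _); rewrite zlamN.
  have N0 : (0 < N)%N by rewrite absz_gt0.
  have exP : exists k, `[< (0 < k)%N /\ in_ideal lam n k >].
    by exists N; apply/asboolP; split.
  case: (ex_minnP exP) => M /asboolP [M0 MI] Mmin.
  exists M; split => //.
    move=> k /andP [k0 kM] kI.
    have := Mmin k (asboolT (conj k0 kI)).
    by rewrite leqNgt kM.
  have rI : in_ideal lam n (N - (N %/ M) * M).
    by apply: in_ideal_sub => //; rewrite leq_trunc_div.
  have re : (N - (N %/ M) * M = N %% M)%N by rewrite {1}(divn_eq N M) addKn.
  rewrite re in rI.
  rewrite /dvdn; apply: contraT; rewrite -lt0n => r0.
  have := Mmin _ (asboolT (conj r0 rI)).
  by rewrite leqNgt ltn_pmod.
Qed.
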